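(* Let $\rho:\mathbb{R}^3\to\mathbb{R}_{\ge 0}$ be a differentiable probability density supported in the closed unit ball of $\mathbb{R}^3$, and let $B=\sup_{\mathbf{x}}|\nabla\rho(\mathbf{x})|$. Let $I_1,I_2$ be the tomographic projections of $\rho$ along unit vectors $\mathbf{u}$ and $\mathbf{v}$ respectively, and let $\measuredangle(\mathbf{u},\mathbf{v})\in[0,\pi]$ be the angle between them. Then $$L_2^R(I_1,I_2)\le 2\sqrt{\pi}\,B\,\measuredangle(\mathbf{u},\mathbf{v}).$$
   Context: For $R\in\mathrm{SO}(3)$ define $(R\rho)(\mathbf{x})=\rho(R^T\mathbf{x})$. The tomographic projection of $\rho$ along a unit vector $\mathbf{u}$ is the function on $\mathbb{R}^2$ given by $I(x,y)=\int_{\mathbb{R}}(R\rho)(x,y,z)\,dz$, where $R\in\mathrm{SO}(3)$ is any rotation with $R\mathbf{u}=(0,0,-1)$; different choices of $R$ change $I$ only by an in-plane rotation. For $g\in\mathrm{SO}(2)$ and a function $I$ on $\mathbb{R}^2$ let $(gI)(\mathbf{w})=I(g^T\mathbf{w})$. The rotationally-invariant Euclidean distance is $L_2^R(I_1,I_2)=\min_{g\in\mathrm{SO}(2)}\|I_1-gI_2\|_{L^2(\mathbb{R}^2)}$. *)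

(* Defs.v *)
From Stdlib Require Import Reals.
From Coquelicot Require Import Coquelicot.
Open Scope R_scope.

Record R3 := mkR3 { c1 : R; c2 : R; c3 : R }.
Definition dot3 (a b : R3) : R := c1 a * c1 b + c2 a * c2 b + c3 a * c3 b.
Definition norm3 (a : R3) : R := sqrt (dot3 a a).
Definition add3 (a b : R3) : R3 := mkR3 (c1 a + c1 b) (c2 a + c2 b) (c3 a + c3 b).

(* 3x3 real matrices, indices 0,1,2 ; entry i j *)
Definition mat3 := nat -> nat -> R.
Definition row3 (M : mat3) (i : nat) (p : R3) : R :=
  M i 0%nat * c1 p + M i 1%nat * c2 p + M i 2%nat * c3 p.
Definition mulv3 (M : mat3) (p : R3) : R3 := mkR3 (row3 M 0 p) (row3 M 1 p) (row3 M 2 p).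
Definition tr3 (M : mat3) : mat3 := fun i j => M j i.
Definition det3 (M : mat3) : R :=
  M 0%nat 0%nat * (M 1%nat 1%nat * M 2%nat 2%nat - M 1%nat 2%nat * M 2%nat 1%nat)
  - M 0%nat 1%nat * (M 1%nat 0%nat * M 2%nat 2%nat - M 1%nat 2%nat * M 2%nat 0%nat)
  + M 0%nat 2%nat * (M 1%nat 0%nat * M 2%nat 1%nat - M 1%nat 1%nat * M 2%nat 0%nat).
Definition SO3 (M : mat3) : Prop :=
  (forall i j, (i < 3)%nat -> (j < 3)%nat ->
     M 0%nat i * M 0%nat j + M 1%nat i * M 1%nat j + M 2%nat i * M 2%nat j
     = if Nat.eqb i j then 1 else 0) /\ det3 M = 1.

Definition mat2 := nat -> nat -> R.
Definition SO2 (g : mat2) : Prop :=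
  (forall i j, (i < 2)%nat -> (j < 2)%nat ->
     g 0%nat i * g 0%nat j + g 1%nat i * g 1%nat j = if Nat.eqb i j then 1 else 0)
  /\ g 0%nat 0%nat * g 1%nat 1%nat - g 0%nat 1%nat * g 1%nat 0%nat = 1.
Definition act2 (g : mat2) (I : R -> R -> R) : R -> R -> R :=
  fun x y => I (g 0%nat 0%nat * x + g 1%nat 0%nat * y) (g 0%nat 1%nat * x + g 1%nat 1%nat * y).

Definition int_R (f : R -> R) : R := RInt_gen f (Rbar_locally m_infty) (Rbar_locally p_infty).

Definition L2norm2 (f : R -> R -> R) : R :=
  sqrt (int_R (fun x => int_R (fun y => (f x y) ^ 2))).

(* rotationally invariant distance: min over SO(2), written as the infimum *)
Definition L2R (I1 I2 : R -> R -> R) : Rbar :=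
  Glb_Rbar (fun r => exists g, SO2 g /\ r = L2norm2 (fun x y => I1 x y - act2 g I2 x y)).

Definition rotate3 (M : mat3) (rho : R3 -> R) : R3 -> R := fun p => rho (mulv3 (tr3 M) p).
Definition projection (M : mat3) (rho : R3 -> R) : R -> R -> R :=
  fun x y => int_R (fun z => rotate3 M rho (mkR3 x y z)).

Definition has_gradient (rho : R3 -> R) (p g : R3) : Prop :=
  forall eps, 0 < eps -> exists delta, 0 < delta /\
    forall h, norm3 h < delta ->
      Rabs (rho (add3 p h) - rho p - dot3 g h) <= eps * norm3 h.

Definition prob_density (rho : R3 -> R) : Prop :=
  (forall p, 0 <= rho p) /\
  int_R (fun x => int_R (fun y => int_R (fun z => rho (mkR3 x y z)))) = 1.

Definition e3neg : R3 := mkR3 0 0 (-1).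
Definition angle3 (u v : R3) : R := acos (dot3 u v).

(* Main.v *)
Require Import Defs.
From Stdlib Require Import Reals Lra Lia Nsatz IndefiniteDescription FunctionalExtensionality.
From Coquelicot Require Import Coquelicot.
Import Defs.
Open Scope R_scope.

Definition sub3 (a b : R3) : R3 := mkR3 (c1 a - c1 b) (c2 a - c2 b) (c3 a - c3 b).
Definition e3p := mkR3 0 0 1.
Lemma lip_cont (f : R -> R) K :
  (forall a b, Rabs (f a - f b) <= K * Rabs (a - b)) -> forall x, continuous f x.
Proof.
intros Hf x. apply continuity_pt_filterlim.
intros eps Heps. exists (eps / (Rabs K + 1)). split.
{ apply Rdiv_lt_0_compat; [lra | pose proof (Rabs_pos K); lra]. }
intros y [_ Hy]. simpl in *. unfold Rdist in *.
pose proof (Hf y x) as H. pose proof (Rabs_pos K). pose proof (Rabs_pos (y - x)).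
assert (K * Rabs (y - x) <= Rabs K * Rabs (y - x)).
{ apply Rmult_le_compat_r; [lra| apply RRle_abs]. }
assert (Rabs K * Rabs (y - x) <= Rabs K * (eps / (Rabs K + 1))).
{ apply Rmult_le_compat_l; lra. }
assert (Rabs K * (eps / (Rabs K + 1)) < eps).
{ assert (E: Rabs K * (eps / (Rabs K + 1)) = eps - eps / (Rabs K + 1)) by (field; lra).
  rewrite E. assert (0 < eps / (Rabs K + 1)) by (apply Rdiv_lt_0_compat; lra). lra. }
lra.
Qed.

Lemma int_R_compact (f : R -> R) K : 0 <= K -> (forall x, continuous f x) ->
  (forall x, K < Rabs x -> f x = 0) -> int_R f = RInt f (-K) K.
Proof.
intros HK Hc Hz. unfold int_R. apply is_RInt_gen_unique.
intros P [eps HP].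
assert (Hex : forall a b, ex_RInt f a b).
{ intros a b. exact (@ex_RInt_continuous R_CompleteNormedModule f a b (fun z _ => Hc z)). }
apply Filter_prod with (fun a => a < -K) (fun b => K < b).
- exists (-K). auto.
- exists K. auto.
- intros a b Ha Hb. simpl. exists (RInt f a b). split.
  + apply RInt_correct, Hex.
  + assert (E : RInt f a b = RInt f (-K) K).
    { rewrite <- (RInt_Chasles f a (-K) b) by apply Hex.
      rewrite <- (RInt_Chasles f (-K) K b) by apply Hex.
      assert (E1 : RInt f a (-K) = 0).
      { rewrite (RInt_ext f (fun _ => 0)). rewrite RInt_const. unfold scal; simpl; unfold mult; simpl; ring.
        intros x Hx. apply Hz. rewrite Rmin_left in Hx by lra. rewrite Rmax_right in Hx by lra.
        rewrite Rabs_left by lra. lra. }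
      assert (E2 : RInt f K b = 0).
      { rewrite (RInt_ext f (fun _ => 0)). rewrite RInt_const. unfold scal; simpl; unfold mult; simpl; ring.
        intros x Hx. apply Hz. rewrite Rmin_left in Hx by lra. rewrite Rmax_right in Hx by lra.
        rewrite Rabs_right by lra. lra. }
      rewrite E1, E2. unfold plus; simpl. ring. }
    rewrite E. apply HP. apply ball_center.
Qed.
Definition mul3 (A B : mat3) : mat3 := fun i j =>
  A i 0%nat * B 0%nat j + A i 1%nat * B 1%nat j + A i 2%nat * B 2%nat j.
Definition ORTH (M : mat3) := forall p q, dot3 (mulv3 M p) (mulv3 M q) = dot3 p q.

Lemma mulv3_mul A B p : mulv3 (mul3 A B) p = mulv3 A (mulv3 B p).
Proof. destruct p; unfold mulv3, row3, mul3; simpl; f_equal; ring. Qed.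
Lemma det3_mul A B : det3 (mul3 A B) = det3 A * det3 B.
Proof. unfold det3, mul3; ring. Qed.
Lemma det3_tr A : det3 (tr3 A) = det3 A.
Proof. unfold det3, tr3; ring. Qed.
Lemma ORTH_mul A B : ORTH A -> ORTH B -> ORTH (mul3 A B).
Proof. intros HA HB p q. rewrite !mulv3_mul, HA, HB. reflexivity. Qed.
Lemma mulv3_sub M p q : mulv3 M (sub3 p q) = sub3 (mulv3 M p) (mulv3 M q).
Proof. destruct p, q; unfold mulv3, row3, sub3; simpl; f_equal; ring. Qed.

Lemma rows_lemma (a b c d e f g h i : R) :
  a*a+d*d+g*g=1 -> a*b+d*e+g*h=0 -> a*c+d*f+g*i=0 -> b*b+e*e+h*h=1 -> b*c+e*f+h*i=0 -> c*c+f*f+i*i=1 ->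
  a*(e*i-f*h) - b*(d*i-f*g) + c*(d*h-e*g) = 1 ->
  a*a+b*b+c*c=1 /\ a*d+b*e+c*f=0 /\ a*g+b*h+c*i=0 /\ d*d+e*e+f*f=1 /\ d*g+e*h+f*i=0 /\ g*g+h*h+i*i=1.
Proof.
intros H1 H2 H3 H4 H5 H6 H7.
repeat split; nsatz.
Qed.

Lemma SO3_cols M : SO3 M ->
  let a := M 0%nat 0%nat in let b := M 0%nat 1%nat in let c := M 0%nat 2%nat in
  let d := M 1%nat 0%nat in let e := M 1%nat 1%nat in let f := M 1%nat 2%nat in
  let g := M 2%nat 0%nat in let h := M 2%nat 1%nat in let i := M 2%nat 2%nat in
  a*a+d*d+g*g=1 /\ a*b+d*e+g*h=0 /\ a*c+d*f+g*i=0 /\ b*b+e*e+h*h=1 /\ b*c+e*f+h*i=0 /\ c*c+f*f+i*i=1 /\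
  a*(e*i-f*h) - b*(d*i-f*g) + c*(d*h-e*g) = 1.
Proof.
intros [H Hd]. simpl.
pose proof (H 0%nat 0%nat ltac:(lia) ltac:(lia)).
pose proof (H 0%nat 1%nat ltac:(lia) ltac:(lia)).
pose proof (H 0%nat 2%nat ltac:(lia) ltac:(lia)).
pose proof (H 1%nat 1%nat ltac:(lia) ltac:(lia)).
pose proof (H 1%nat 2%nat ltac:(lia) ltac:(lia)).
pose proof (H 2%nat 2%nat ltac:(lia) ltac:(lia)).
simpl in *. unfold det3 in Hd. repeat split; assumption.
Qed.

Lemma SO3_ORTH M : SO3 M -> ORTH M /\ ORTH (tr3 M).
Proof.
intros HM. pose proof (SO3_cols M HM) as C. simpl in C.
destruct C as (H1&H2&H3&H4&H5&H6&H7).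
destruct (rows_lemma _ _ _ _ _ _ _ _ _ H1 H2 H3 H4 H5 H6 H7) as (R1&R2&R3&R4&R5&R6).
split; intros [x y z] [x' y' z']; unfold dot3, mulv3, row3, tr3; simpl; nsatz.
Qed.

Lemma ORTH_SO3 M : ORTH M -> det3 M = 1 -> SO3 M.
Proof.
intros HO Hd. split; [|exact Hd].
pose proof (HO (mkR3 1 0 0) (mkR3 1 0 0)) as E00.
pose proof (HO (mkR3 1 0 0) (mkR3 0 1 0)) as E01.
pose proof (HO (mkR3 1 0 0) (mkR3 0 0 1)) as E02.
pose proof (HO (mkR3 0 1 0) (mkR3 1 0 0)) as E10.
pose proof (HO (mkR3 0 1 0) (mkR3 0 1 0)) as E11.
pose proof (HO (mkR3 0 1 0) (mkR3 0 0 1)) as E12.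
pose proof (HO (mkR3 0 0 1) (mkR3 1 0 0)) as E20.
pose proof (HO (mkR3 0 0 1) (mkR3 0 1 0)) as E21.
pose proof (HO (mkR3 0 0 1) (mkR3 0 0 1)) as E22.
unfold dot3, mulv3, row3 in *; simpl in *.
intros i j Hi Hj.
destruct i as [|[|[|i]]]; [| | |lia]; destruct j as [|[|[|j]]]; try lia; simpl; clear HO Hd; ring_simplify in E00; ring_simplify in E01; ring_simplify in E02; ring_simplify in E10; ring_simplify in E11; ring_simplify in E12; ring_simplify in E20; ring_simplify in E21; ring_simplify in E22; lra.
Qed.

Lemma SO3_tr M : SO3 M -> SO3 (tr3 M).
Proof. intros H. apply ORTH_SO3. apply (SO3_ORTH M H). rewrite det3_tr. apply H. Qed.
Lemma SO3_mul A B : SO3 A -> SO3 B -> SO3 (mul3 A B).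
Proof. intros HA HB. apply ORTH_SO3. apply ORTH_mul; [apply (SO3_ORTH A HA)|apply (SO3_ORTH B HB)].
rewrite det3_mul. destruct HA as [_ ->]. destruct HB as [_ ->]. ring. Qed.

Lemma SO3_inv M p : SO3 M -> mulv3 (tr3 M) (mulv3 M p) = p.
Proof.
intros HM. pose proof (SO3_cols M HM) as C. simpl in C.
destruct C as (H1&H2&H3&H4&H5&H6&H7). destruct p as [x y z].
unfold mulv3, row3, tr3; simpl; f_equal; nsatz.
Qed.
Lemma SO3_inv' M p : SO3 M -> mulv3 M (mulv3 (tr3 M) p) = p.
Proof. intros HM. pose proof (SO3_inv (tr3 M) p (SO3_tr M HM)). exact H. Qed.

Lemma ORTH_norm M p : ORTH M -> norm3 (mulv3 M p) = norm3 p.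
Proof. intros H. unfold norm3. rewrite H. reflexivity. Qed.
Lemma sqrt_bound X c Y : X <= (c*c)*Y -> 0 <= c -> 0 <= Y -> sqrt X <= c * sqrt Y.
Proof.
intros H Hc HY. apply Rle_trans with (sqrt ((c*c)*Y)). apply sqrt_le_1_alt; exact H.
rewrite sqrt_mult by nra. rewrite sqrt_square by lra. lra.
Qed.

Lemma cos_lb t : 0 <= t <= PI -> 1 - t*t/2 <= cos t.
Proof.
intros Ht. replace t with (2 * (t/2)) at 3 by field. rewrite cos_2a_sin.
assert (H1 : 0 <= sin (t/2)) by (apply sin_ge_0; lra).
assert (H2 : sin (t/2) <= t/2).
{ destruct (Req_dec t 0) as [->|Hn]. replace (0/2) with 0 by field. rewrite sin_0. lra.
  left. apply sin_lt_x. lra. }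
nra.
Qed.

Definition flipm : mat3 := fun i j => match i, j with
  | 0%nat, 0%nat => 1 | 1%nat, 1%nat => -1 | 2%nat, 2%nat => -1 | _, _ => 0 end.
Definition rod (b1 b2 b3 k : R) : mat3 := fun i j =>
  match i, j with
  | 0%nat, 0%nat => 1 - b1*b1*k | 0%nat, 1%nat => - (b1*b2*k) | 0%nat, 2%nat => b1
  | 1%nat, 0%nat => - (b1*b2*k) | 1%nat, 1%nat => 1 - b2*b2*k | 1%nat, 2%nat => b2
  | 2%nat, 0%nat => - b1 | 2%nat, 1%nat => - b2 | 2%nat, 2%nat => b3 | _, _ => 0 end.

Lemma rot_exists (b : R3) : dot3 b b = 1 ->
  exists Q, SO3 Q /\ mulv3 Q e3p = b /\
    forall p, norm3 (sub3 p (mulv3 Q p)) <= acos (c3 b) * norm3 p.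
Proof.
destruct b as [b1 b2 b3]. unfold dot3; simpl. intros Hb.
assert (Hb3 : -1 <= b3 <= 1) by nra.
destruct (Req_dec b3 (-1)) as [Heq|Hne].
- assert (b1 = 0) by nra. assert (b2 = 0) by nra. subst.
  exists flipm. split; [|split].
  + split; [|unfold det3, flipm; simpl; ring].
    intros i j Hi Hj. destruct i as [|[|[|i]]]; [| | |lia]; destruct j as [|[|[|j]]]; try lia;
    unfold flipm; simpl; ring.
  + unfold mulv3, row3, e3p, flipm; simpl. f_equal; ring.
  + intros [x y z]. simpl c3. replace (acos (-1)) with PI by (replace (-1) with (-(1)) by ring; rewrite acos_opp, acos_1; ring).
    unfold norm3, dot3, sub3, mulv3, row3, flipm; simpl.
    pose proof PI2_3_2.
    apply Rle_trans with (2 * sqrt (x * x + y * y + z * z)).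
    apply sqrt_bound; [nra|lra|nra].
    apply Rmult_le_compat_r; [apply sqrt_pos|lra].
- assert (Hk : / (1 + b3) * (1 + b3) = 1) by (field; lra).
  assert (Hkp : 0 < / (1 + b3)) by (apply Rinv_0_lt_compat; lra).
  generalize dependent (/ (1 + b3)). intros k Hk Hkp.
  exists (rod b1 b2 b3 k). split; [|split].
  + split.
    * intros i j Hi Hj. destruct i as [|[|[|i]]]; [| | |lia]; destruct j as [|[|[|j]]]; try lia;
      unfold rod; simpl; clear - Hb Hk; nsatz.
    * unfold det3, rod; simpl; clear - Hb Hk; nsatz.
  + unfold mulv3, row3, e3p, rod; simpl. f_equal; ring.
  + intros [x y z]. simpl.
    pose proof (acos_bound b3) as Hab. pose proof (cos_lb _ Hab) as Hc.
    rewrite cos_acos in Hc by lra.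
    unfold norm3, dot3, sub3, mulv3, row3, rod; simpl.
    apply sqrt_bound; [|lra|nra].
    assert (E : (x - ((1 - b1 * b1 * k) * x + - (b1 * b2 * k) * y + b1 * z)) *
 (x - ((1 - b1 * b1 * k) * x + - (b1 * b2 * k) * y + b1 * z)) +
 (y - (- (b1 * b2 * k) * x + (1 - b2 * b2 * k) * y + b2 * z)) *
 (y - (- (b1 * b2 * k) * x + (1 - b2 * b2 * k) * y + b2 * z)) +
 (z - (- b1 * x + - b2 * y + b3 * z)) * (z - (- b1 * x + - b2 * y + b3 * z))
  = 2 * (1 - b3) * (x*x+y*y+z*z) - 2 * k * (b1*y - b2*x) * (b1*y - b2*x)) by (clear - Hb Hk; nsatz).
    rewrite E. 
    assert (HS : 0 <= (b1*y - b2*x) * (b1*y - b2*x)) by (pose proof (Rle_0_sqr (b1*y-b2*x)); unfold Rsqr in *; lra).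
    assert (0 <= k * ((b1*y - b2*x) * (b1*y - b2*x))) by (apply Rmult_le_pos; lra).
    assert (HN : 0 <= x*x+y*y+z*z) by (pose proof (Rle_0_sqr x); pose proof (Rle_0_sqr y); pose proof (Rle_0_sqr z); unfold Rsqr in *; lra).
    assert (2 * (1 - b3) <= acos b3 * acos b3) by lra.
    assert (2 * (1 - b3) * (x*x+y*y+z*z) <= acos b3 * acos b3 * (x*x+y*y+z*z)) by (apply Rmult_le_compat_r; lra).
    nra.
Qed.
Lemma dot_self_nonneg p : 0 <= dot3 p p.
Proof. destruct p as [x y z]; unfold dot3; simpl.
pose proof (Rle_0_sqr x); pose proof (Rle_0_sqr y); pose proof (Rle_0_sqr z); unfold Rsqr in *; lra. Qed.

Lemma CS3 g d : Rabs (dot3 g d) <= norm3 g * norm3 d.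
Proof.
unfold norm3. rewrite <- sqrt_mult by apply dot_self_nonneg.
rewrite <- sqrt_Rsqr_abs. apply sqrt_le_1_alt. unfold Rsqr.
destruct g as [g1 g2 g3], d as [d1 d2 d3]; unfold dot3; simpl.
assert (E : (g1 * g1 + g2 * g2 + g3 * g3) * (d1 * d1 + d2 * d2 + d3 * d3) -
  (g1 * d1 + g2 * d2 + g3 * d3) * (g1 * d1 + g2 * d2 + g3 * d3) =
  (g1*d2-g2*d1)*(g1*d2-g2*d1) + (g1*d3-g3*d1)*(g1*d3-g3*d1) + (g2*d3-g3*d2)*(g2*d3-g3*d2)) by ring.
pose proof (Rle_0_sqr (g1*d2-g2*d1)); pose proof (Rle_0_sqr (g1*d3-g3*d1)); pose proof (Rle_0_sqr (g2*d3-g3*d2)); unfold Rsqr in *; lra.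
Qed.

Definition scal3 (t : R) (d : R3) : R3 := mkR3 (t * c1 d) (t * c2 d) (t * c3 d).

Lemma norm3_scal t d : norm3 (scal3 t d) = Rabs t * norm3 d.
Proof.
unfold norm3. rewrite <- sqrt_Rsqr_abs. rewrite <- sqrt_mult by (try apply dot_self_nonneg; apply Rle_0_sqr).
f_equal. destruct d; unfold dot3, scal3, Rsqr; simpl; ring.
Qed.

Lemma dot3_scal g t d : dot3 g (scal3 t d) = t * dot3 g d.
Proof. destruct g, d; unfold dot3, scal3; simpl; ring. Qed.

Lemma norm3_sub_sym a b : norm3 (sub3 a b) = norm3 (sub3 b a).
Proof. unfold norm3; f_equal; destruct a, b; unfold dot3, sub3; simpl; ring. Qed.

Lemma rho_lip (rho : R3 -> R) (B : R) :
  (forall p, exists g, has_gradient rho p g) ->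
  (forall p g, has_gradient rho p g -> norm3 g <= B) ->
  forall a b, Rabs (rho a - rho b) <= B * norm3 (sub3 a b).
Proof.
intros Hg HB a b.
set (G := fun p => proj1_sig (constructive_indefinite_description _ (Hg p))).
assert (HG : forall p, has_gradient rho p (G p)).
{ intros p. unfold G. destruct (constructive_indefinite_description _ (Hg p)); assumption. }
set (d := sub3 b a).
set (pt := fun t => add3 a (scal3 t d)).
set (phi := fun t => rho (pt t)).
set (f' := fun t => dot3 (G (pt t)) d).
assert (Hd : forall t, derivable_pt_lim phi t (f' t)).
{ intros t eps Heps.
  pose proof (norm3 d) as nd. pose proof (sqrt_pos (dot3 d d)) as Hnd. fold (norm3 d) in Hnd.
  destruct (HG (pt t) (eps / (2 * (norm3 d + 1)))) as [del [Hdel Hh]].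
  { apply Rdiv_lt_0_compat; lra. }
  assert (Hpos : 0 < del / (norm3 d + 1)) by (apply Rdiv_lt_0_compat; lra).
  exists (mkposreal _ Hpos). simpl. intros h Hh0 Hhd.
  assert (Ept : pt (t + h) = add3 (pt t) (scal3 h d)).
  { unfold pt, add3, scal3; simpl. f_equal; ring. }
  assert (Hn : norm3 (scal3 h d) < del).
  { rewrite norm3_scal.
    apply Rle_lt_trans with (Rabs h * (norm3 d + 1)). apply Rmult_le_compat_l; [apply Rabs_pos|lra].
    apply Rmult_lt_reg_r with (/ (norm3 d + 1)). apply Rinv_0_lt_compat; lra.
    rewrite Rmult_assoc, Rinv_r by lra. unfold Rdiv in Hhd. lra. }
  specialize (Hh _ Hn). rewrite dot3_scal, norm3_scal in Hh.
  unfold phi. rewrite Ept. unfold f'.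
  assert (Hhabs : 0 < Rabs h) by (apply Rabs_pos_lt; exact Hh0).
  replace ((rho (add3 (pt t) (scal3 h d)) - rho (pt t)) / h - dot3 (G (pt t)) d)
    with ((rho (add3 (pt t) (scal3 h d)) - rho (pt t) - h * dot3 (G (pt t)) d) / h) by (field; exact Hh0).
  unfold Rdiv. rewrite Rabs_mult, Rabs_inv.
  apply Rle_lt_trans with (eps / (2 * (norm3 d + 1)) * (Rabs h * norm3 d) * / Rabs h).
  { apply Rmult_le_compat_r; [left; apply Rinv_0_lt_compat; lra | exact Hh]. }
  replace (eps / (2 * (norm3 d + 1)) * (Rabs h * norm3 d) * / Rabs h) with
     (eps * (norm3 d / (2 * (norm3 d + 1)))) by (field; lra).
  assert (norm3 d / (2 * (norm3 d + 1)) < 1).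
  { apply Rmult_lt_reg_r with (2 * (norm3 d + 1)). lra. unfold Rdiv. rewrite Rmult_assoc, Rinv_l by lra. lra. }
  nra. }
destruct (MVT_cor2 phi f' 0 1 Rlt_0_1 (fun c _ => Hd c)) as [c [Hc _]].
assert (E1 : pt 1 = b) by (unfold pt, add3, scal3, d, sub3; destruct a, b; simpl; f_equal; ring).
assert (E0 : pt 0 = a) by (unfold pt, add3, scal3, d, sub3; destruct a, b; simpl; f_equal; ring).
unfold phi in Hc. rewrite E1, E0 in Hc.
rewrite Rabs_minus_sym, Hc. replace (1 - 0) with 1 by ring. rewrite Rmult_1_r.
unfold f'. eapply Rle_trans; [apply CS3|]. rewrite (norm3_sub_sym a b). fold d.
apply Rmult_le_compat_r; [apply sqrt_pos|apply (HB _ _ (HG (pt c)))].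
Qed.
Lemma RInt_poly c : RInt (fun y => c * (1 - y*y)) (-1) 1 = c * (4/3).
Proof.
apply is_RInt_unique.
assert (H := is_RInt_derive (fun y => c * (y - y*y*y/3)) (fun y => c * (1 - y*y)) (-1) 1).
replace (c * (4/3)) with (minus (c * (1 - 1*1*1/3)) (c * (-1 - (-1)*(-1)*(-1)/3))).
2:{ unfold minus, plus, opp; simpl. field. }
apply H.
- intros x _. auto_derive. auto. field.
- intros x _. apply (ex_derive_continuous (fun y => c * (1 - y*y))). auto_derive. auto.
Qed.
Lemma normsub_z x y a b : norm3 (sub3 (mkR3 x y a) (mkR3 x y b)) = Rabs (a - b).
Proof. unfold norm3, dot3, sub3; simpl. rewrite <- sqrt_Rsqr_abs. f_equal. unfold Rsqr; ring. Qed.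
Lemma normsub_y x z a b : norm3 (sub3 (mkR3 x a z) (mkR3 x b z)) = Rabs (a - b).
Proof. unfold norm3, dot3, sub3; simpl. rewrite <- sqrt_Rsqr_abs. f_equal. unfold Rsqr; ring. Qed.
Lemma normsub_x y z a b : norm3 (sub3 (mkR3 a y z) (mkR3 b y z)) = Rabs (a - b).
Proof. unfold norm3, dot3, sub3; simpl. rewrite <- sqrt_Rsqr_abs. f_equal. unfold Rsqr; ring. Qed.
Lemma norm_gt x y z : 1 < x*x+y*y+z*z -> 1 < norm3 (mkR3 x y z).
Proof. intros H. unfold norm3, dot3; simpl. rewrite <- sqrt_1. apply sqrt_lt_1_alt. lra. Qed.
Lemma sqge z : 0 <= z*z.
Proof. pose proof (Rle_0_sqr z); unfold Rsqr in *; lra. Qed.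
Lemma abs_sq z : Rabs z * Rabs z = z * z.
Proof. rewrite <- Rabs_mult. apply Rabs_pos_eq, sqge. Qed.

Lemma RInt_minus' (f g : R -> R) a b : ex_RInt f a b -> ex_RInt g a b ->
  RInt f a b - RInt g a b = RInt (fun z => f z - g z) a b.
Proof. intros Hf Hg. exact (eq_sym (RInt_minus f g a b Hf Hg)). Qed.

Lemma sq_lip a b M N : Rabs (a - b) <= M -> Rabs a <= N -> Rabs b <= N ->
  Rabs (a^2 - b^2) <= M * (2 * N).
Proof.
intros H1 H2 H3. replace (a^2 - b^2) with ((a - b) * (a + b)) by ring.
rewrite Rabs_mult. apply Rmult_le_compat; try apply Rabs_pos; auto.
eapply Rle_trans. apply Rabs_triang. lra.
Qed.

Lemma RInt_zero (f : R -> R) a b : a <= b -> (forall x, a < x < b -> f x = 0) -> RInt f a b = 0.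
Proof.
intros Hab H. rewrite (RInt_ext f (fun _ => 0)). rewrite RInt_const. unfold scal; simpl; unfold mult; simpl; ring.
intros x Hx. rewrite Rmin_left in Hx by lra. rewrite Rmax_right in Hx by lra. auto.
Qed.

Lemma core (d : R3 -> R) K L : 0 <= K -> 0 <= L ->
  (forall p q, Rabs (d p - d q) <= K * norm3 (sub3 p q)) ->
  (forall p, 1 < norm3 p -> d p = 0) ->
  (forall p, Rabs (d p) <= L) ->
  int_R (fun x => int_R (fun y => (RInt (fun z => d (mkR3 x y z)) (-1) 1) ^ 2)) <= 64/9 * L^2.
Proof.
intros HK HL Hlip Hsupp Hbd.
set (P := fun x y => RInt (fun z => d (mkR3 x y z)) (-1) 1).
change (int_R (fun x => int_R (fun y => (P x y) ^ 2)) <= 64/9 * L^2).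
assert (Hcz : forall x y z, continuous (fun z => d (mkR3 x y z)) z).
{ intros x y. apply (lip_cont _ K). intros a b. rewrite <- (normsub_z x y a b). apply Hlip. }
assert (Hexz : forall x y a b, ex_RInt (fun z => d (mkR3 x y z)) a b).
{ intros. exact (@ex_RInt_continuous R_CompleteNormedModule _ a b (fun z _ => Hcz x y z)). }
assert (HP0 : forall x y, 1 < x*x+y*y -> P x y = 0).
{ intros x y Hxy. unfold P. apply RInt_zero. lra.
  intros z _. apply Hsupp. apply norm_gt. pose proof (sqge z); lra. }
assert (HPb : forall x y, Rabs (P x y) <= 2 * L).
{ intros x y. unfold P. eapply Rle_trans. apply abs_RInt_le_const. lra. apply Hexz. intros t _. apply Hbd. lra. }
assert (HPs : forall x y, x*x+y*y <= 1 -> (P x y)^2 <= 4 * L^2 * (1 - x*x - y*y)).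
{ intros x y Hxy. set (s := sqrt (1 - x*x - y*y)).
  assert (Hs0 : 0 <= s) by apply sqrt_pos.
  assert (Hss : s * s = 1 - x*x - y*y) by (apply sqrt_sqrt; lra).
  assert (Hs1 : s <= 1).
  { destruct (Rle_lt_dec s 1) as [|Hlt]; [assumption|]. assert (1 * 1 < s * s) by (apply Rmult_le_0_lt_compat; lra). pose proof (sqge x); pose proof (sqge y); lra. }
  assert (Hz : forall z, s < Rabs z -> d (mkR3 x y z) = 0).
  { intros z Hz. apply Hsupp, norm_gt. rewrite <- (abs_sq z). assert (s * s < Rabs z * Rabs z) by (apply Rmult_le_0_lt_compat; lra). lra. }
  assert (E : P x y = RInt (fun z => d (mkR3 x y z)) (-s) s).
  { unfold P. rewrite <- (RInt_Chasles _ (-1) (-s) 1) by apply Hexz.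
    rewrite <- (RInt_Chasles _ (-s) s 1) by apply Hexz.
    rewrite (RInt_zero _ (-1) (-s)), (RInt_zero _ s 1).
    - unfold plus; simpl. ring.
    - lra.
    - intros z Hz'. apply Hz. rewrite Rabs_pos_eq; lra.
    - lra.
    - intros z Hz'. apply Hz. rewrite Rabs_left; lra. }
  assert (HA : Rabs (P x y) <= (s - - s) * L).
  { rewrite E. apply abs_RInt_le_const. lra. apply Hexz. intros; apply Hbd. }
  rewrite <- pow2_abs. pose proof (Rabs_pos (P x y)).
  assert (Rabs (P x y) * Rabs (P x y) <= (2 * s * L) * (2 * s * L)).
  { apply Rmult_le_compat; lra. }
  replace (4 * L^2 * (1 - x*x - y*y)) with ((2 * s * L) * (2 * s * L)) by (rewrite <- Hss; ring).
  simpl; lra. }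
assert (HPy : forall x y y', Rabs (P x y - P x y') <= 2 * K * Rabs (y - y')).
{ intros x y y'. unfold P. rewrite RInt_minus' by apply Hexz.
  eapply Rle_trans. apply abs_RInt_le_const with (M := K * Rabs (y - y')). lra.
  apply (ex_RInt_minus (V:=R_CompleteNormedModule)); apply Hexz.
  intros t _. eapply Rle_trans. apply Hlip. rewrite normsub_y. lra.
  right; ring. }
assert (HPx : forall x x' y, Rabs (P x y - P x' y) <= 2 * K * Rabs (x - x')).
{ intros x x' y. unfold P. rewrite RInt_minus' by apply Hexz.
  eapply Rle_trans. apply abs_RInt_le_const with (M := K * Rabs (x - x')). lra.
  apply (ex_RInt_minus (V:=R_CompleteNormedModule)); apply Hexz.
  intros t _. eapply Rle_trans. apply Hlip. rewrite normsub_x. lra.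
  right; ring. }
assert (Hcy : forall x y, continuous (fun y => P x y ^ 2) y).
{ intros x. apply (lip_cont _ (2 * K * (2 * (2 * L)))). intros a b.
  eapply Rle_trans. apply sq_lip. apply HPy. apply HPb. apply HPb. right; ring. }
assert (Hexy : forall x a b, ex_RInt (fun y => P x y ^ 2) a b).
{ intros. exact (@ex_RInt_continuous R_CompleteNormedModule _ a b (fun z _ => Hcy x z)). }
assert (Hin : forall x, int_R (fun y => P x y ^ 2) = RInt (fun y => P x y ^ 2) (-1) 1).
{ intros x. apply int_R_compact. lra. apply Hcy.
  intros y Hy. rewrite HP0. simpl; ring. rewrite <- (abs_sq y).
  assert (1 * 1 < Rabs y * Rabs y) by (apply Rmult_le_0_lt_compat; lra). pose proof (sqge x). lra. }
set (F := fun x => int_R (fun y => P x y ^ 2)).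
assert (HFx : forall a b, Rabs (F a - F b) <= 2 * (2 * K * (2 * (2 * L))) * Rabs (a - b)).
{ intros a b. unfold F. rewrite !Hin. rewrite RInt_minus' by apply Hexy.
  eapply Rle_trans. apply abs_RInt_le_const with (M := 2 * K * Rabs (a - b) * (2 * (2 * L))). lra.
  apply (ex_RInt_minus (V:=R_CompleteNormedModule)); apply Hexy.
  intros t _. apply sq_lip. apply HPx. apply HPb. apply HPb.
  right; ring. }
assert (HcF : forall x, continuous F x) by (apply (lip_cont _ _ HFx)).
assert (HexF : ex_RInt F (-1) 1).
{ exact (@ex_RInt_continuous R_CompleteNormedModule _ _ _ (fun z _ => HcF z)). }
assert (Hout : int_R F = RInt F (-1) 1).
{ apply int_R_compact. lra. apply HcF.
  intros x Hx. unfold F. rewrite Hin. apply RInt_zero. lra.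
  intros y _. rewrite HP0. simpl; ring. rewrite <- (abs_sq x).
  assert (1 * 1 < Rabs x * Rabs x) by (apply Rmult_le_0_lt_compat; lra). pose proof (sqge y). lra. }
change (int_R F <= 64/9 * L^2). rewrite Hout.
apply Rle_trans with (RInt (fun x => (16/3 * L^2) * (1 - x*x)) (-1) 1).
2:{ rewrite RInt_poly. right; field. }
apply RInt_le. lra. exact HexF.
{ exact (@ex_RInt_continuous R_CompleteNormedModule _ _ _ (fun z _ =>
     ex_derive_continuous (fun x => (16/3 * L^2) * (1 - x*x)) z ltac:(auto_derive; auto))). }
intros x Hx. unfold F. rewrite Hin.
apply Rle_trans with (RInt (fun y => (4 * L^2 * (1 - x*x)) * (1 - y*y)) (-1) 1).
2:{ rewrite RInt_poly. right; field. }
apply RInt_le. lra. apply Hexy.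
{ exact (@ex_RInt_continuous R_CompleteNormedModule _ _ _ (fun z _ =>
     ex_derive_continuous (fun y => (4 * L^2 * (1 - x*x)) * (1 - y*y)) z ltac:(auto_derive; auto))). }
intros y Hy.
assert (H1x : 0 <= 1 - x*x) by nra. assert (H1y : 0 <= 1 - y*y) by nra.
assert (HL2 : 0 <= L^2) by (simpl; nra).
destruct (Rle_lt_dec (x*x+y*y) 1) as [Hle|Hgt].
- eapply Rle_trans. apply HPs. exact Hle.
  assert (0 <= x*x*(y*y)) by (apply Rmult_le_pos; apply sqge).
  assert (1 - x*x - y*y <= (1 - x*x) * (1 - y*y)) by nra.
  replace (4 * L^2 * (1 - x*x) * (1 - y*y)) with (4 * L^2 * ((1 - x*x) * (1 - y*y))) by ring.
  apply Rmult_le_compat_l; lra.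
- rewrite HP0 by lra. simpl. rewrite Rmult_0_l.
  apply Rmult_le_pos; [apply Rmult_le_pos|]; lra.
Qed.

Lemma main_bound (h1 h2 : R3 -> R) (B L : R) :
  0 <= B -> 0 <= L ->
  (forall p q, Rabs (h1 p - h1 q) <= B * norm3 (sub3 p q)) ->
  (forall p q, Rabs (h2 p - h2 q) <= B * norm3 (sub3 p q)) ->
  (forall p, 1 < norm3 p -> h1 p = 0) -> (forall p, 1 < norm3 p -> h2 p = 0) ->
  (forall p, Rabs (h1 p - h2 p) <= L) ->
  int_R (fun x => int_R (fun y => (int_R (fun z => h1 (mkR3 x y z)) - int_R (fun z => h2 (mkR3 x y z))) ^ 2))
   <= 64/9 * L^2.
Proof.
intros HB HL L1 L2 S1 S2 HD.
assert (Hc : forall h : R3 -> R, (forall p q, Rabs (h p - h q) <= B * norm3 (sub3 p q)) ->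
   (forall p, 1 < norm3 p -> h p = 0) ->
   forall x y, int_R (fun z => h (mkR3 x y z)) = RInt (fun z => h (mkR3 x y z)) (-1) 1 /\
     ex_RInt (fun z => h (mkR3 x y z)) (-1) 1).
{ intros h Lh Sh x y.
  assert (Hcz : forall z, continuous (fun z => h (mkR3 x y z)) z).
  { apply (lip_cont _ B). intros a b. rewrite <- (normsub_z x y a b). apply Lh. }
  split.
  - apply int_R_compact. lra. exact Hcz. intros z Hz. apply Sh. apply norm_gt.
    rewrite <- (abs_sq z). assert (1 * 1 < Rabs z * Rabs z) by (apply Rmult_le_0_lt_compat; lra).
    pose proof (sqge x); pose proof (sqge y); lra.
  - exact (@ex_RInt_continuous R_CompleteNormedModule _ _ _ (fun z _ => Hcz z)). }
assert (E : (fun x => int_R (fun y => (int_R (fun z => h1 (mkR3 x y z)) - int_R (fun z => h2 (mkR3 x y z))) ^ 2))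
  = (fun x => int_R (fun y => (RInt (fun z => (fun p => h1 p - h2 p) (mkR3 x y z)) (-1) 1) ^ 2))).
{ apply functional_extensionality; intro x. apply (f_equal int_R). apply functional_extensionality; intro y.
  destruct (Hc h1 L1 S1 x y) as [E1 X1]. destruct (Hc h2 L2 S2 x y) as [E2 X2].
  rewrite E1, E2. rewrite (RInt_minus' _ _ _ _ X1 X2). reflexivity. }
rewrite E. apply (core (fun p => h1 p - h2 p) (2 * B) L). lra. lra.
- intros p q. replace (h1 p - h2 p - (h1 q - h2 q)) with ((h1 p - h1 q) - (h2 p - h2 q)) by ring.
  eapply Rle_trans. apply Rabs_triang. rewrite Rabs_Ropp. pose proof (L1 p q). pose proof (L2 p q). lra.
- intros p Hp. rewrite S1, S2 by exact Hp. ring.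
- exact HD.
Qed.

Theorem proposition2 (rho : R3 -> R) (B : R) (u v : R3) (M1 M2 : mat3) :
  prob_density rho ->
  (forall p, exists g, has_gradient rho p g) ->
  (forall p, 1 < norm3 p -> rho p = 0) ->
  is_lub_Rbar (fun r => exists p g, has_gradient rho p g /\ r = norm3 g) B ->
  norm3 u = 1 -> norm3 v = 1 ->
  SO3 M1 -> mulv3 M1 u = e3neg ->
  SO3 M2 -> mulv3 M2 v = e3neg ->
  Rbar_le (L2R (projection M1 rho) (projection M2 rho))
          (Finite (2 * sqrt PI * B * angle3 u v)).
Proof.
intros _ Hgrad Hsupp [Hub _] Hu Hv HM1 Hu1 HM2 Hv2.
assert (HB : forall p g, has_gradient rho p g -> norm3 g <= B).
{ intros p g Hg. exact (Hub (norm3 g) (ex_intro _ p (ex_intro _ g (conj Hg eq_refl)))). }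
assert (HB0 : 0 <= B).
{ destruct (Hgrad (mkR3 0 0 0)) as [g Hg]. eapply Rle_trans; [apply sqrt_pos|]. apply (HB _ _ Hg). }
pose proof (rho_lip rho B Hgrad HB) as Hlip.
assert (Hvv : dot3 v v = 1).
{ symmetry. rewrite <- (Rmult_1_r 1) at 1. apply sqrt_lem_0. apply dot_self_nonneg. lra. exact Hv. }
destruct (SO3_ORTH M1 HM1) as [O1 O1t].
destruct (SO3_ORTH M2 HM2) as [O2 O2t].
set (b := mulv3 M1 (mkR3 (- c1 v) (- c2 v) (- c3 v))).
assert (Hbb : dot3 b b = 1).
{ unfold b. rewrite O1. rewrite <- Hvv. destruct v; unfold dot3; simpl; ring. }
assert (Hb3 : c3 b = dot3 u v).
{ rewrite <- O1, Hu1. unfold b. destruct v; unfold dot3, mulv3, row3, e3neg; simpl; ring. }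
destruct (rot_exists b Hbb) as [Q [HQ [HQe HQn]]].
rewrite Hb3 in HQn. fold (angle3 u v) in HQn. set (th := angle3 u v) in *.
assert (Hth : 0 <= th) by apply acos_bound.
destruct (SO3_ORTH Q HQ) as [OQ OQt].
set (T := mul3 (tr3 Q) (mul3 M1 (tr3 M2))).
assert (HT : SO3 T) by (apply SO3_mul; [apply SO3_tr; exact HQ| apply SO3_mul; [exact HM1| apply SO3_tr; exact HM2]]).
assert (HTe : mulv3 T e3p = e3p).
{ unfold T. rewrite !mulv3_mul.
  assert (E2 : mulv3 (tr3 M2) e3p = mkR3 (- c1 v) (- c2 v) (- c3 v)).
  { pose proof (SO3_inv M2 v HM2) as E. rewrite Hv2 in E. rewrite <- E.
    unfold mulv3, row3, tr3, e3p, e3neg; simpl; f_equal; ring. }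
  rewrite E2. fold b. rewrite <- HQe. apply SO3_inv. exact HQ. }
unfold mulv3, row3, e3p in HTe. simpl in HTe. injection HTe as T02 T12 T22.
assert (T02' : T 0%nat 2%nat = 0) by lra.
assert (T12' : T 1%nat 2%nat = 0) by lra.
assert (T22' : T 2%nat 2%nat = 1) by lra.
pose proof (SO3_cols T HT) as C. simpl in C. destruct C as (C1&C2&C3&C4&C5&C6&C7).
rewrite T02', T12', T22' in *.
assert (T20 : T 2%nat 0%nat = 0) by lra.
assert (T21 : T 2%nat 1%nat = 0) by lra.
rewrite T20, T21 in *.
assert (HSO2 : SO2 T).
{ split.
  - intros i j Hi Hj. destruct i as [|[|i]]; [| |lia]; destruct j as [|[|j]]; try lia; simpl; lra.
  - lra. }
set (h1 := fun p => rho (mulv3 (tr3 M1) p)).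
set (h2 := fun p => rho (mulv3 (tr3 M2) (mkR3 (T 0%nat 0%nat * c1 p + T 1%nat 0%nat * c2 p)
                                              (T 0%nat 1%nat * c1 p + T 1%nat 1%nat * c2 p) (c3 p)))).
assert (Hh2 : forall p, h2 p = rho (mulv3 (tr3 M1) (mulv3 Q p))).
{ intros [x y z]. unfold h2. f_equal.
  assert (E1 : mkR3 (T 0%nat 0%nat * x + T 1%nat 0%nat * y) (T 0%nat 1%nat * x + T 1%nat 1%nat * y) z
     = mulv3 (tr3 T) (mkR3 x y z)).
  { unfold mulv3, row3, tr3; simpl. rewrite T20, T21, T02', T12', T22'. f_equal; ring. }
  assert (E2 : mulv3 (tr3 T) (mkR3 x y z) = mulv3 M2 (mulv3 (tr3 M1) (mulv3 Q (mkR3 x y z)))).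
  { unfold T, mulv3, row3, tr3, mul3; simpl. f_equal; ring. }
  simpl. rewrite E1, E2. apply SO3_inv. exact HM2. }
assert (L1 : forall p q, Rabs (h1 p - h1 q) <= B * norm3 (sub3 p q)).
{ intros p q. unfold h1. eapply Rle_trans; [apply Hlip|]. rewrite <- mulv3_sub, ORTH_norm by exact O1t. lra. }
assert (L2 : forall p q, Rabs (h2 p - h2 q) <= B * norm3 (sub3 p q)).
{ intros p q. rewrite !Hh2. eapply Rle_trans; [apply Hlip|].
  rewrite <- !mulv3_sub, ORTH_norm by exact O1t. rewrite ORTH_norm by exact OQ. lra. }
assert (S1 : forall p, 1 < norm3 p -> h1 p = 0).
{ intros p Hp. unfold h1. apply Hsupp. rewrite ORTH_norm by exact O1t. exact Hp. }
assert (S2 : forall p, 1 < norm3 p -> h2 p = 0).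
{ intros p Hp. rewrite Hh2. apply Hsupp. rewrite ORTH_norm by exact O1t. rewrite ORTH_norm by exact OQ. exact Hp. }
assert (HD : forall p, Rabs (h1 p - h2 p) <= B * th).
{ intros p. destruct (Rle_lt_dec (norm3 p) 1) as [Hp|Hp].
  - rewrite Hh2. unfold h1. eapply Rle_trans; [apply Hlip|].
    rewrite <- mulv3_sub, ORTH_norm by exact O1t.
    apply Rmult_le_compat_l; [exact HB0|]. eapply Rle_trans; [apply HQn|].
    pose proof (sqrt_pos (dot3 p p)). fold (norm3 p) in *. nra.
  - rewrite S1, S2 by exact Hp. rewrite Rminus_0_r, Rabs_R0. apply Rmult_le_pos; assumption. }
pose proof (main_bound h1 h2 B (B * th) HB0 ltac:(apply Rmult_le_pos; assumption) L1 L2 S1 S2 HD) as MB.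
unfold L2R. destruct (Glb_Rbar_correct (fun r => exists g, SO2 g /\ r = L2norm2 (fun x y =>
   projection M1 rho x y - act2 g (projection M2 rho) x y))) as [Hlb _].
eapply Rbar_le_trans. apply Hlb. exists T. split. exact HSO2. reflexivity.
simpl. unfold L2norm2.
apply Rle_trans with (sqrt (64/9 * (B * th)^2)).
{ apply sqrt_le_1_alt. exact MB. }
pose proof PI2_3_2.
replace (2 * sqrt PI * B * th) with ((2 * B * th) * sqrt PI) by ring.
apply sqrt_bound; [| apply Rmult_le_pos; [lra|assumption] | lra].
assert (0 <= (B * th) * (B * th)) by (apply Rmult_le_pos; apply Rmult_le_pos; assumption).
simpl. nra.
Qed.
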